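(* Let $A\in\mathbf{bal}$ and let $e:A\to A^\sigma$ be its canonical extension. Then for every basic algebra $C$ and every $\mathbf{bal}$-morphism $\alpha:A\to C$ there is a unique normal homomorphism $\gamma:A^\sigma\to C$ with $\gamma\circ e=\alpha$. Hence $A\mapsto A^\sigma$ is a reflector and $\mathbf{balg}$ is a (non-full) reflective subcategory of $\mathbf{bal}$.
   Context: An $\ell$-algebra is a commutative unital $\mathbb{R}$-algebra with a lattice order compatible with addition, with products and nonnegative scalar multiples of nonnegative elements nonnegative. It is bounded if each $a\le n\cdot1$ for some $n\in\mathbb{N}$, archimedean if $n\cdot a\le b$ for all $n$ implies $a\le0$. $\mathbf{bal}$ is the category of bounded archimedean $\ell$-algebras and unital $\ell$-algebra homomorphisms. An $\ell$-algebra is Dedekind complete if every subset bounded above has a least upper bound. The idempotents $\mathrm{Id}(A)$ form a boolean algebra with $e\vee f=e+f-ef$, $e\wedge f=ef$, $\neg e=1-e$. A basic algebra is a Dedekind complete $A\in\mathbf{bal}$ with $\mathrm{Id}(A)$ atomic. A normal homomorphism between basic algebras is a $\mathbf{bal}$-morphism preserving all existing joins and meets; $\mathbf{balg}$ is the category of basic algebras and normal homomorphisms. A canonical extension of $A\in\mathbf{bal}$ is a basic algebra $A^\sigma$ with a $\mathbf{bal}$-monomorphism $e:A\to A^\sigma$ such that (Density) every element of $A^\sigma$ is a join of meets of elements of $e[A]$, and (Compactness) for $S,T\subseteq A$ and real $\varepsilon>0$, $\bigwedge e[S]+\varepsilon\le\bigvee e[T]$ implies $\bigwedge e[S']\le\bigvee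 e[T']$ for some finite $S'\subseteq S$, $T'\subseteq T$. Every $A\in\mathbf{bal}$ has a canonical extension, unique up to isomorphism, namely the algebra $B(Y_A)$ of all bounded real functions on the set $Y_A$ of maximal $\ell$-ideals of $A$, with $e(a)(M)=r$ where $a+M=r+M$. *)

(* Defs.v *)
From HB Require Import structures.
From mathcomp Require Import all_boot all_order all_algebra.
From mathcomp Require Import Rstruct.
From Stdlib Require Import Reals.

Set Implicit Arguments.
Unset Strict Implicit.
Unset Printing Implicit Defensive.

Import GRing.Theory Num.Theory.
Local Open Scope ring_scope.

Notation R := Rdefinitions.R.

(* A (possibly trivial) commutative unital ring carrying a scalar action of R
   and a relation [le]; the axioms making it an l-algebra are in [lalg_axioms]. *)
Record lalg := LAlg {
  lcar :> comPzRingType;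
  sc : R -> lcar -> lcar;
  le : lcar -> lcar -> Prop
}.

Section Defs.
Variable A : lalg.
Implicit Types (a b c : A) (X : A -> Prop).

Definition ub X u := forall x, X x -> le x u.
Definition lb X l := forall x, X x -> le l x.
Definition is_lub X s := ub X s /\ (forall u, ub X u -> le s u).
Definition is_glb X m := lb X m /\ (forall l, lb X l -> le l m).

Definition pair_set a b : A -> Prop := fun x => x = a \/ x = b.

Definition lalg_axioms : Prop :=
  (forall r a b, sc r (a + b) = sc r a + sc r b) /\
  (forall r s a, sc (r + s) a = sc r a + sc s a) /\
  (forall r s a, sc (r * s) a = sc r (sc s a)) /\
  (forall a, sc 1 a = a) /\
  (forall r a b, sc r (a * b) = sc r a * b) /\
  (forall a, le a a) /\
  (forall a b, le a b -> le b a -> a = b) /\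
  (forall a b c, le a b -> le b c -> le a c) /\
  (forall a b, exists s, is_lub (pair_set a b) s) /\
  (forall a b, exists m, is_glb (pair_set a b) m) /\
  (forall a b c, le a b -> le (a + c) (b + c)) /\
  (forall a b, le 0 a -> le 0 b -> le 0 (a * b)) /\
  (forall (r : R) a, (0 <= r)%R -> le 0 a -> le 0 (sc r a)).

Definition bounded : Prop := forall a, exists n : nat, le a (1 *+ n).

Definition archimedean : Prop :=
  forall a b, (forall n : nat, le (a *+ n) b) -> le a 0.

Definition bal : Prop := lalg_axioms /\ bounded /\ archimedean.

Definition dedekind_complete : Prop :=
  forall X, (exists x, X x) -> (exists u, ub X u) -> exists s, is_lub X s.

Definition idempotent a := a * a = a.
(* in the boolean algebra Id(A): f <= e iff f /\ e = f e = f, bottom is 0 *)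
Definition Id_atom a :=
  idempotent a /\ a <> 0 /\
  (forall f, idempotent f -> f * a = f -> f = 0 \/ f = a).
Definition Id_atomic : Prop :=
  forall e, idempotent e -> e <> 0 -> exists p, Id_atom p /\ p * e = p.

Definition basic : Prop := bal /\ dedekind_complete /\ Id_atomic.

End Defs.

Definition image (A B : lalg) (f : A -> B) (X : A -> Prop) : B -> Prop :=
  fun y => exists2 x, X x & y = f x.

Definition bal_mor (A B : lalg) (f : A -> B) : Prop :=
  (forall a b, f (a + b) = f a + f b) /\
  (forall a b, f (a * b) = f a * f b) /\
  f 1 = 1 /\
  (forall r a, f (sc r a) = sc r (f a)) /\
  (forall a b s, is_lub (pair_set a b) s -> is_lub (pair_set (f a) (f b)) (f s)) /\
  (forall a b m, is_glb (pair_set a b) m -> is_glb (pair_set (f a) (f b)) (f m)).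

Definition normal_hom (A B : lalg) (f : A -> B) : Prop :=
  bal_mor f /\
  (forall X s, is_lub X s -> is_lub (image f X) (f s)) /\
  (forall X m, is_glb X m -> is_glb (image f X) (f m)).

Definition density (A S : lalg) (e : A -> S) : Prop :=
  forall x : S, exists K : S -> Prop,
    (forall k, K k -> exists U : A -> Prop, is_glb (image e U) k) /\
    is_lub K x.

Definition compactness (A S : lalg) (e : A -> S) : Prop :=
  forall (X Y : A -> Prop) (eps : R) (m j : S),
    (0 < eps)%R -> is_glb (image e X) m -> is_lub (image e Y) j ->
    le (m + sc eps 1) j ->
    exists (X' Y' : seq A) (m' j' : S),
      (forall x, x \in X' -> X x) /\ (forall y, y \in Y' -> Y y) /\
      is_glb (image e (fun x => x \in X')) m' /\
      is_lub (image e (fun y => y \in Y')) j' /\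
      le m' j'.

Definition canonical_extension (A S : lalg) (e : A -> S) : Prop :=
  basic S /\ bal_mor e /\ injective e /\ density e /\ compactness e.

(* Main.v *)
Require Import Defs.
From mathcomp Require Import all_boot all_order all_algebra.
From mathcomp Require Import ring lra Rstruct.
From Stdlib Require Import IndefiniteDescription Classical FunctionalExtensionality.
Set Implicit Arguments. Unset Strict Implicit. Unset Printing Implicit Defensive.
Import GRing.Theory Num.Theory Order.TTheory.
Local Open Scope ring_scope.

Lemma eps_ex (P : R -> Prop) : exists x : R, (exists y, P y) -> P x.
Proof.
case: (classic (exists y, P y)) => [[y hy]|hn]; first by exists y.
by exists 0 => h; exfalso.
Qed.
Definition myeps (P : R -> Prop) : R :=
  proj1_sig (constructive_indefinite_description _ (eps_ex P)).
Lemma myeps_spec (P : R -> Prop) : (exists y, P y) -> P (myeps P).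
Proof. exact: (proj2_sig (constructive_indefinite_description _ (eps_ex P))). Qed.

Section LG.
Variable B : lalg.
Hypothesis HB : lalg_axioms B.
Hypothesis Hbd : bounded B.
Hypothesis Har : archimedean B.
Local Notation "a <=: b" := (le a b) (at level 70, no associativity).
Implicit Types a b c d x y z u v w : B.
Implicit Types r s : R.

Ltac dax := destruct HB as (?&?&?&?&?&?&?&?&?&?&?&?&?).

Lemma scDr r a b : sc r (a + b) = sc r a + sc r b. Proof. by dax. Qed.
Lemma scDl r s a : sc (r + s) a = sc r a + sc s a. Proof. by dax. Qed.
Lemma scM r s a : sc (r * s) a = sc r (sc s a). Proof. by dax. Qed.
Lemma sc1 a : sc 1 a = a. Proof. by dax. Qed.
Lemma scMl r a b : sc r (a * b) = sc r a * b. Proof. by dax. Qed.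
Lemma lle_refl a : a <=: a. Proof. by dax. Qed.
Lemma lle_anti a b : a <=: b -> b <=: a -> a = b. Proof. by dax; eauto. Qed.
Lemma lle_trans a b c : a <=: b -> b <=: c -> a <=: c. Proof. by dax; eauto. Qed.
Lemma lub_ex a b : exists w, is_lub (pair_set a b) w. Proof. by dax. Qed.
Lemma lle_addr a b c : a <=: b -> a + c <=: b + c. Proof. by dax; eauto. Qed.
Lemma lle_mul0 a b : 0 <=: a -> 0 <=: b -> 0 <=: a * b. Proof. by dax; eauto. Qed.
Lemma lle_sc0 (r : R) a : 0 <= r -> 0 <=: a -> 0 <=: sc r a. Proof. by move=> h1 h2; dax; apply: H11 => //; apply/RleP. Qed.

Lemma lle_addl a b c : a <=: b -> c + a <=: c + b.
Proof. by rewrite ![c + _]addrC; apply: lle_addr. Qed.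
Lemma lle_add2 a b c d : a <=: b -> c <=: d -> a + c <=: b + d.
Proof. move=> h1 h2; apply: (lle_trans (lle_addr c h1)); exact: lle_addl. Qed.
Lemma lle_subP a b : a <=: b <-> 0 <=: b - a.
Proof.
split=> h; first by have := lle_addr (-a) h; rewrite subrr.
by have := lle_addr a h; rewrite add0r subrK.
Qed.
Lemma lle_fromsub a b : 0 <=: b - a -> a <=: b. Proof. exact: (proj2 (lle_subP a b)). Qed.
Lemma lle_tosub a b : a <=: b -> 0 <=: b - a. Proof. exact: (proj1 (lle_subP a b)). Qed.
Lemma lle_opp a b : a <=: b -> -b <=: -a.
Proof. by move/lle_subP => h; apply/lle_subP; rewrite opprK addrC. Qed.
Lemma lle_sub a b c : a <=: b - c -> a + c <=: b.
Proof. by move=> h; have := lle_addr c h; rewrite subrK. Qed.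
Lemma lle_sub' a b c : a + c <=: b -> a <=: b - c.
Proof. by move=> h; have := lle_addr (-c) h; rewrite addrK. Qed.
Lemma lle_eq a b c : a = b -> b <=: c -> a <=: c. Proof. by move->. Qed.
Lemma lle_eqr a b c : a <=: b -> b = c -> a <=: c. Proof. by move=> h <-. Qed.

Lemma sc0r a : sc 0 a = 0.
Proof. by apply: (@addrI _ (sc 0 a)); rewrite addr0 -scDl addr0. Qed.
Lemma scr0 r : sc r (0 : B) = 0.
Proof. by apply: (@addrI _ (sc r 0)); rewrite addr0 -scDr addr0. Qed.
Lemma scNl r a : sc (- r) a = - sc r a.
Proof. by apply: (@addrI _ (sc r a)); rewrite -scDl subrr sc0r subrr. Qed.
Lemma scNr r a : sc r (- a) = - sc r a.
Proof. by apply: (@addrI _ (sc r a)); rewrite -scDr !subrr scr0. Qed.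
Lemma scBl r s a : sc (r - s) a = sc r a - sc s a.
Proof. by rewrite scDl scNl. Qed.
Lemma scBr r a b : sc r (a - b) = sc r a - sc r b.
Proof. by rewrite scDr scNr. Qed.
Lemma sc_nat n a : sc n%:R a = a *+ n.
Proof.
elim: n => [|n IH]; first by rewrite sc0r mulr0n.
by rewrite -[n.+1%:R]/(1 *+ n.+1) mulrS scDl sc1 IH mulrS.
Qed.
Lemma sc_1mul r a : sc r a = sc r 1 * a.
Proof. by rewrite -scMl mul1r. Qed.
Lemma scMr r a b : sc r (a * b) = a * sc r b.
Proof. by rewrite [a * sc _ _]mulrC -scMl mulrC. Qed.
Lemma sc_sc r s a : sc r (sc s a) = sc (r * s) a.
Proof. by rewrite scM. Qed.

Lemma lle_sc r a b : 0 <= r -> a <=: b -> sc r a <=: sc r b.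
Proof. move=> hr /lle_subP h; apply/lle_subP; rewrite -scBr; exact: lle_sc0. Qed.
Lemma lle_mulr c a b : 0 <=: c -> a <=: b -> c * a <=: c * b.
Proof. move=> hc /lle_subP h; apply/lle_subP; rewrite -mulrBr; exact: lle_mul0. Qed.
Lemma lle_mull c a b : 0 <=: c -> a <=: b -> a * c <=: b * c.
Proof. by rewrite ![_ * c]mulrC; apply: lle_mulr. Qed.
Lemma lle_muln a b n : a <=: b -> a *+ n <=: b *+ n.
Proof.
move=> h; elim: n => [|n IH]; first by rewrite !mulr0n; exact: lle_refl.
by rewrite !mulrS; apply: lle_add2.
Qed.
Lemma lle_muln0 a n : 0 <=: a -> 0 <=: a *+ n.
Proof. by move=> h; have := lle_muln n h; rewrite mul0rn. Qed.

Definition jn a b : B :=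
  proj1_sig (constructive_indefinite_description _ (lub_ex a b)).
Lemma jnP a b : is_lub (pair_set a b) (jn a b).
Proof. exact: proj2_sig (constructive_indefinite_description _ _). Qed.
Lemma jn_l a b : a <=: jn a b.
Proof. by case: (jnP a b) => h _; apply: h; left. Qed.
Lemma jn_r a b : b <=: jn a b.
Proof. by case: (jnP a b) => h _; apply: h; right. Qed.
Lemma jn_min a b c : a <=: c -> b <=: c -> jn a b <=: c.
Proof. by move=> h1 h2; case: (jnP a b) => _ h; apply: h => x [->|->]. Qed.
Lemma lub_uniq (X : B -> Prop) w w' : is_lub X w -> is_lub X w' -> w = w'.
Proof. move=> [h1 h2] [h3 h4]; apply: lle_anti; [exact: h2|exact: h4]. Qed.
Lemma glb_uniq (X : B -> Prop) w w' : is_glb X w -> is_glb X w' -> w = w'.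
Proof. move=> [h1 h2] [h3 h4]; apply: lle_anti; [exact: h4|exact: h2]. Qed.
Lemma jnE a b w : is_lub (pair_set a b) w -> w = jn a b.
Proof. move=> h; exact: lub_uniq h (jnP a b). Qed.
Lemma jnC a b : jn a b = jn b a.
Proof. by apply: lle_anti; apply: jn_min; (exact: jn_l || exact: jn_r). Qed.
Lemma jn_addr a b c : jn a b + c = jn (a + c) (b + c).
Proof.
apply: lle_anti.
  apply: lle_sub; apply: jn_min; apply: lle_sub'; [exact: jn_l|exact: jn_r].
by apply: jn_min; apply: lle_addr; [exact: jn_l|exact: jn_r].
Qed.
Lemma jn_mono a a' b : a <=: a' -> jn a b <=: jn a' b.
Proof. move=> h; apply: jn_min; [exact: lle_trans h (jn_l _ _)|exact: jn_r]. Qed.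
Lemma jn_ge a b : a <=: b -> jn a b = b.
Proof. move=> h; apply: lle_anti; [exact: jn_min (lle_refl _)|exact: jn_r]. Qed.

Definition mt a b : B := a + b - jn a b.
Lemma mt_l a b : mt a b <=: a.
Proof.
apply: lle_fromsub; have -> : a - mt a b = jn a b - b by rewrite /mt; ring.
by apply: lle_tosub; exact: jn_r.
Qed.
Lemma mt_r a b : mt a b <=: b.
Proof.
apply: lle_fromsub; have -> : b - mt a b = jn a b - a by rewrite /mt; ring.
by apply: lle_tosub; exact: jn_l.
Qed.
Lemma mt_max a b c : c <=: a -> c <=: b -> c <=: mt a b.
Proof.
move=> h1 h2; apply: lle_fromsub.
have -> : mt a b - c = (a + b - c) - jn a b by rewrite /mt; ring.
apply: lle_tosub; apply: jn_min.
  apply: lle_fromsub; have -> : a + b - c - a = b - c by ring. by apply: lle_tosub.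
apply: lle_fromsub; have -> : a + b - c - b = a - c by ring. by apply: lle_tosub.
Qed.
Lemma mtP a b : is_glb (pair_set a b) (mt a b).
Proof.
split; first by move=> x [->|->]; [exact: mt_l|exact: mt_r].
by move=> l h; apply: mt_max; apply: h; [left|right].
Qed.
Lemma mtE a b m : is_glb (pair_set a b) m -> m = mt a b.
Proof. move=> h; exact: glb_uniq h (mtP a b). Qed.
Lemma mtC a b : mt a b = mt b a.
Proof. by apply: lle_anti; apply: mt_max; (exact: mt_l || exact: mt_r). Qed.
Lemma mt_mono a a' b : a <=: a' -> mt a b <=: mt a' b.
Proof. move=> h; apply: mt_max; [exact: lle_trans (mt_l _ _) h|exact: mt_r]. Qed.
Lemma mt_le a b : a <=: b -> mt a b = a.
Proof. move=> h; apply: lle_anti; [exact: mt_l|exact: mt_max (lle_refl _) h]. Qed.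
Lemma mt_ge0 a b : 0 <=: a -> 0 <=: b -> 0 <=: mt a b.
Proof. exact: mt_max. Qed.
Lemma jn_mt a b : jn a b = a + b - mt a b.
Proof. rewrite /mt; ring. Qed.

Definition pp a := jn a 0.
Definition np a := jn (- a) 0.
Lemma pp_ge0 a : 0 <=: pp a. Proof. exact: jn_r. Qed.
Lemma np_ge0 a : 0 <=: np a. Proof. exact: jn_r. Qed.
Lemma ppE a : a = pp a - np a.
Proof.
have h : np a + a = jn 0 a by rewrite /np jn_addr addNr add0r.
rewrite /pp jnC -h; ring.
Qed.
Lemma mt_pp_np a : mt (pp a) (np a) = 0.
Proof.
apply: lle_anti; last exact: mt_ge0 (pp_ge0 _) (np_ge0 _).
set m := mt _ _.
have h : pp a <=: pp a - m.
  apply: jn_min.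
    rewrite {1}(ppE a); apply: lle_addl; apply: lle_opp; exact: mt_r.
  by apply: lle_fromsub; rewrite subr0; apply: lle_tosub; exact: mt_l.
move/lle_subP: h; rewrite (_ : pp a - m - pp a = - m); last by ring.
by move/lle_opp; rewrite oppr0 opprK.
Qed.
Lemma pp_uniq u v : 0 <=: u -> 0 <=: v -> mt u v = 0 -> pp (u - v) = u.
Proof.
move=> hu hv huv; rewrite /pp -(subrr v) -jn_addr jn_mt huv; ring.
Qed.
Lemma jn_pp a b : jn a b = pp (a - b) + b.
Proof. by rewrite /pp jn_addr subrK add0r. Qed.
Lemma np_pp a : np a = pp (- a). Proof. by []. Qed.

Lemma lle_subl a b c : a <=: b + c -> a - c <=: b.
Proof. by move=> h; have := lle_addr (-c) h; rewrite addrK. Qed.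
Lemma lle_addsub a b c : a - c <=: b -> a <=: b + c.
Proof. by move=> h; have := lle_addr c h; rewrite subrK. Qed.

Lemma riesz a b c : 0 <=: a -> 0 <=: b -> 0 <=: c ->
  mt a (b + c) <=: mt a b + mt a c.
Proof.
move=> ha hb hc; set m := mt a (b + c).
have h : m - mt a b <=: mt a c.
  apply: mt_max.
    apply: lle_eqr (_ : a + 0 = a); last by rewrite addr0.
    apply: lle_add2; first exact: mt_l.
    by rewrite -oppr0; apply: lle_opp; exact: mt_ge0.
  have -> : m - mt a b = jn a b + (m - a - b) by rewrite /mt; ring.
  rewrite jn_addr; apply: jn_min.
    rewrite (_ : a + (m - a - b) = m - b); last by ring.
    by apply: lle_subl; rewrite addrC; exact: mt_r.
  rewrite (_ : b + (m - a - b) = m - a); last by ring.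
  apply: lle_trans hc; apply: lle_subl; rewrite add0r; exact: mt_l.
apply: lle_eq (_ : m = (m - mt a b) + mt a b) _; first by rewrite subrK.
by rewrite addrC; apply: lle_addl.
Qed.

Lemma mt0r a : 0 <=: a -> mt 0 a = 0. Proof. exact: mt_le. Qed.
Lemma mtr0 a : 0 <=: a -> mt a 0 = 0. Proof. by move=> h; rewrite mtC mt0r. Qed.

Lemma disj_muln a b n : 0 <=: a -> 0 <=: b -> mt a b = 0 -> mt a (b *+ n) = 0.
Proof.
move=> ha hb hab; elim: n => [|n IH]; first by rewrite mulr0n mtr0.
apply: lle_anti; last by apply: mt_ge0 => //; exact: lle_muln0.
rewrite mulrS; apply: lle_trans (riesz ha hb (lle_muln0 n hb)) _.
by rewrite hab IH addr0; exact: lle_refl.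
Qed.
Lemma disj_muln2 a b m n : 0 <=: a -> 0 <=: b -> mt a b = 0 ->
  mt (a *+ m) (b *+ n) = 0.
Proof.
move=> ha hb hab; rewrite mtC; apply: disj_muln => //; first exact: lle_muln0.
by rewrite mtC; apply: disj_muln.
Qed.

Lemma mt_id a : mt a a = a. Proof. exact: mt_le (lle_refl _). Qed.
Lemma lle_sc_r r s a : r <= s -> 0 <=: a -> sc r a <=: sc s a.
Proof.
move=> hrs ha; apply: lle_fromsub; rewrite -scBl; apply: lle_sc0 => //.
by rewrite subr_ge0.
Qed.
Lemma bnd a : exists n : nat, a <=: 1 *+ n. Proof. exact: Hbd. Qed.
Lemma bnd_below a : exists n : nat, - (1 *+ n) <=: a.
Proof. have [n h] := bnd (- a); exists n; have := lle_opp h; by rewrite opprK. Qed.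
Lemma arch a b : (forall n : nat, a *+ n <=: b) -> a <=: 0. Proof. exact: Har. Qed.

Lemma sc_inv_nat n a : sc (n.+1%:R^-1) (a *+ n.+1) = a.
Proof.
rewrite -(sc_nat) (sc_sc) mulVf ?(sc1) //.
by rewrite pnatr_eq0.
Qed.

Lemma le01 : 0 <=: (1 : B).
Proof.
have [n h] := bnd (- 1).
have h2 : 0 <=: (1 : B) *+ n.+1.
  by have := lle_addr 1 h; rewrite addNr mulrSr.
have hr : 0 <= (n.+1%:R : R)^-1 by rewrite invr_ge0 ler0n.
by have := lle_sc hr h2; rewrite (scr0) sc_inv_nat.
Qed.

Lemma arch_sc p a : 0 <=: p -> (forall eps : R, 0 < eps -> a <=: sc eps p) -> a <=: 0.
Proof.
move=> hp h; apply: (arch (b := p)) => -[|n]; first by rewrite mulr0n.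
have hn : 0 < (n.+1%:R : R)^-1 by rewrite invr_gt0 ltr0n.
have hr : 0 <= (n.+1%:R : R) by rewrite ler0n.
have := lle_sc hr (h _ hn); rewrite (sc_sc) mulfV ?pnatr_eq0 //.
by rewrite (sc1) (sc_nat).
Qed.

Lemma fprop a b c : 0 <=: a -> 0 <=: b -> 0 <=: c -> mt a b = 0 -> mt (c * a) b = 0.
Proof.
move=> ha hb hc hab; apply: lle_anti; last first.
  by apply: mt_ge0 => //; apply: lle_mul0.
have [n hn] := bnd c.
have h1 : c * a <=: a *+ n.
  by have := lle_mull ha hn; rewrite mulr_natl.
apply: (lle_trans (mt_mono b h1)).
rewrite mtC // -(mulr1n b) disj_muln2 //; last by rewrite mtC.
exact: lle_refl.
Qed.

Lemma disj_mul0 a b : 0 <=: a -> 0 <=: b -> mt a b = 0 -> a * b = 0.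
Proof.
move=> ha hb hab.
have h1 : mt (b * a) b = 0 by apply: fprop.
have h2 : mt (a * b) (b * a) = 0.
  apply: fprop => //; first by apply: lle_mul0.
  by rewrite mtC.
by rewrite mulrC mt_id in h2; rewrite mulrC.
Qed.

Lemma sq_ge0 a : 0 <=: a * a.
Proof.
have hpn : pp a * np a = 0.
  by apply: disj_mul0; rewrite ?mt_pp_np //; [exact: pp_ge0|exact: np_ge0].
rewrite (ppE a).
have -> : (pp a - np a) * (pp a - np a) = pp a * pp a + np a * np a - (pp a * np a) *+ 2.
  by ring.
rewrite hpn mul0rn subr0.
have := lle_add2 (lle_mul0 (pp_ge0 a) (pp_ge0 a))
                  (lle_mul0 (np_ge0 a) (np_ge0 a)).
by rewrite addr0.
Qed.

Lemma semiprime z : 0 <=: z -> z * z = 0 -> z = 0.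
Proof.
move=> hz hzz; apply: lle_anti (hz); apply: (@arch _ 1) => n.
have h := sq_ge0 (z *+ n - 1).
have e : (z *+ n - 1) * (z *+ n - 1) = (z * z) *+ (n * n) - z *+ (n + n) + 1.
  by ring.
rewrite e hzz mul0rn sub0r addrC in h.
have h1 : z *+ (n + n) <=: 1 by apply: lle_fromsub.
apply: lle_trans h1.
rewrite mulrnDr; apply: (lle_eq (esym (addr0 _))); apply: lle_addl; exact: lle_muln0.
Qed.

Lemma mul0_disj a b : 0 <=: a -> 0 <=: b -> a * b = 0 -> mt a b = 0.
Proof.
move=> ha hb hab; set m := mt a b.
have hm : 0 <=: m by exact: mt_ge0.
apply: semiprime => //; apply: lle_anti; last exact: sq_ge0.
apply: (lle_trans (lle_mull hm (mt_l a b))).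
by rewrite -hab; apply: lle_mulr => //; exact: mt_r.
Qed.

Lemma pp_mul c a : 0 <=: c -> pp (c * a) = c * pp a.
Proof.
move=> hc; rewrite {1}(ppE a) mulrBr; apply: pp_uniq.
- exact: lle_mul0 hc (pp_ge0 a).
- exact: lle_mul0 hc (np_ge0 a).
have h1 : mt (c * pp a) (np a) = 0.
  apply: fprop => //; [exact: pp_ge0|exact: np_ge0|exact: mt_pp_np].
rewrite mtC; apply: fprop => //; [exact: np_ge0|exact: lle_mul0 hc (pp_ge0 a)|].
by rewrite mtC.
Qed.

Lemma np_mul c a : 0 <=: c -> np (c * a) = c * np a.
Proof. by move=> hc; rewrite /np -mulrN; apply: pp_mul. Qed.

Definition idem a := a * a = a.
Lemma idem_ge0 p : idem p -> 0 <=: p.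
Proof. by move=> h; rewrite -h; exact: sq_ge0. Qed.
Lemma idem_compl p : idem p -> idem (1 - p).
Proof. by rewrite /idem => h; rewrite mulrBl mul1r mulrBr mulr1 h subrr subr0. Qed.
Lemma idem_le1 p : idem p -> p <=: 1.
Proof. by move=> h; apply: lle_fromsub; apply: idem_ge0; exact: idem_compl. Qed.
Lemma idem_disj p : idem p -> mt p (1 - p) = 0.
Proof.
move=> h; apply: mul0_disj; [exact: idem_ge0|exact: idem_ge0 (idem_compl h)|].
by rewrite mulrBr mulr1 h subrr.
Qed.

Hypothesis Hdc : dedekind_complete B.

Lemma lub_ex_set (X : B -> Prop) : (exists x, X x) -> (exists u, ub X u) ->
  exists w, is_lub X w.
Proof. exact: Hdc. Qed.

Lemma glb_ex_set (X : B -> Prop) : (exists x, X x) -> (exists l, lb X l) ->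
  exists w, is_glb X w.
Proof.
move=> [x hx] [l hl].
have [w [hw1 hw2]] : exists w, is_lub (fun y => X (- y)) w.
  apply: lub_ex_set; first by exists (- x); rewrite opprK.
  by exists (- l) => y hy; have := lle_opp (hl _ hy); rewrite opprK.
exists (- w); split.
  move=> y hy; have hy' : X (- - y) by rewrite opprK.
  by have := lle_opp (hw1 _ hy'); rewrite opprK.
move=> l' hl'; have : w <=: - l'.
  by apply: hw2 => y hy; have := lle_opp (hl' _ hy); rewrite opprK.
by move/lle_opp; rewrite opprK.
Qed.

Lemma distr (X : B -> Prop) w z : is_lub X w ->
  is_lub (Defs.image (fun x => mt x z) X) (mt w z).
Proof.
move=> [hw1 hw2]; split.
  by move=> y [x hx ->]; apply: mt_mono; exact: hw1.
move=> t ht.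
have h : w <=: t + jn w z - z.
  apply: hw2 => x hx.
  have -> : x = mt x z + jn x z - z by rewrite /mt; ring.
  apply: lle_addr; apply: lle_add2; first by apply: ht; exists x.
  by apply: jn_mono; exact: hw1.
have := lle_addr (z - jn w z) h.
have -> : t + jn w z - z + (z - jn w z) = t by ring.
by have -> : w + (z - jn w z) = mt w z by rewrite /mt; ring.
Qed.

Definition Wc z p := fun w => exists n : nat, w = mt (z *+ n) p.

Lemma comp_ex z p : 0 <=: z -> idem p -> exists f, is_lub (Wc z p) f.
Proof.
move=> hz hp; apply: lub_ex_set; first by exists (mt (z *+ 0) p), 0%N.
by exists p => w [n ->]; exact: mt_r.
Qed.

Lemma comp_props z p f : 0 <=: z -> idem p -> is_lub (Wc z p) f ->
  [/\ idem f, f * p = f, 0 <=: f & f <=: p].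
Proof.
move=> hz hp [hf1 hf2].
have hp0 := idem_ge0 hp.
have hw n : 0 <=: mt (z *+ n) p by apply: mt_ge0 => //; exact: lle_muln0.
have hwf n : mt (z *+ n) p <=: f by apply: hf1; exists n.
have f0 : 0 <=: f by apply: lle_trans (hw 0%N) (hwf 0%N).
have fp : f <=: p by apply: hf2 => w [n ->]; exact: mt_r.
have hpf : 0 <=: p - f by exact: lle_tosub.
have hg n : mt (mt (z *+ n) p) (p - f) = 0.
  set g := mt _ _.
  have hg0 : 0 <=: g by exact: mt_ge0.
  have hgz : g <=: z *+ n by apply: lle_trans (mt_l _ _) (mt_l _ _).
  have hgp m : g <=: p - mt (z *+ m) p.
    apply: lle_trans (mt_r _ _) _; apply: lle_addl; apply: lle_opp; exact: hwf.
  have hM M : g *+ M <=: p.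
    elim: M => [|M IH]; first by rewrite mulr0n.
    have h1 : g *+ M <=: mt (z *+ (n * M)) p.
      by apply: mt_max => //; rewrite mulrnA; exact: lle_muln.
    rewrite mulrS; apply: lle_trans (lle_add2 (hgp (n * M)%N) h1) _.
    by rewrite subrK; exact: lle_refl.
  by apply: lle_anti (hg0); apply: (arch (b := p)).
have hfpf : mt f (p - f) = 0.
  apply: lle_anti; last exact: mt_ge0.
  case: (distr (p - f) (conj hf1 hf2)) => _; apply.
  by move=> y [x [n ->] ->]; rewrite hg; exact: lle_refl.
have e1 : f * (p - f) = 0 by exact: disj_mul0.
have e2 : f * (1 - p) = 0.
  apply: disj_mul0 => //; first exact: idem_ge0 (idem_compl hp).
  apply: lle_anti; last by apply: mt_ge0 => //; exact: idem_ge0 (idem_compl hp).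
  by rewrite -(idem_disj hp); apply: mt_mono.
have efp : f * p = f.
  have -> : f * p = f * 1 - f * (1 - p) by ring.
  by rewrite e2 subr0 mulr1.
split => //.
rewrite /idem; have -> : f * f = f * p - f * (p - f) by ring.
by rewrite e1 subr0 efp.
Qed.

Hypothesis Hat : Id_atomic B.

Lemma mt_mono2 a a' b b' : a <=: a' -> b <=: b' -> mt a b <=: mt a' b'.
Proof.
move=> h1 h2; apply: mt_max.
  exact: lle_trans (mt_l _ _) h1.
exact: lle_trans (mt_r _ _) h2.
Qed.

Lemma pp0 : pp 0 = 0. Proof. exact: jn_ge (lle_refl _). Qed.
Lemma np0 : np 0 = 0. Proof. rewrite /np oppr0; exact: pp0. Qed.

Section Atom.
Variable p : B.
Hypothesis hp : Id_atom p.

Lemma atom_idem : idem p. Proof. by case: hp. Qed.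
Lemma atom_nz : p <> 0. Proof. by case: hp => _ []. Qed.
Lemma atom_min f : idem f -> f * p = f -> f = 0 \/ f = p.
Proof. by case: hp => _ [] _; apply. Qed.
Lemma atom_ge0 : 0 <=: p. Proof. exact: idem_ge0 atom_idem. Qed.
Lemma atom_le1 : p <=: 1. Proof. exact: idem_le1 atom_idem. Qed.

Lemma atom_dist q : Id_atom q -> p <> q -> q * p = 0.
Proof.
move=> hq hpq; have hi : idem (q * p).
  rewrite /idem; have -> : q * p * (q * p) = (q * q) * (p * p) by ring.
  by rewrite atom_idem; case: hq => ->.
have e1 : q * p * p = q * p by rewrite -mulrA atom_idem.
case: (atom_min hi e1) => // e2.
have e3 : p * q * q = p * q by case: hq => hq' _; rewrite -mulrA hq'.
have hi' : idem (p * q) by rewrite /idem mulrC -(mulrC q p) hi.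
case: hq => _ [_ hq3].
case: (hq3 _ hi' e3) => e4; first by rewrite mulrC.
by exfalso; apply: hpq; rewrite -e2 mulrC e4.
Qed.

Lemma fix_p x : x * p = x -> pp x * p = pp x.
Proof.
move=> hx.
have h1 : pp x * (1 - p) = 0.
  have hc : 0 <=: 1 - p by apply: idem_ge0; apply: idem_compl; exact: atom_idem.
  rewrite mulrC -pp_mul // (_ : (1 - p) * x = 0) ?pp0 //.
  by rewrite mulrBl mul1r mulrC hx subrr.
have -> : pp x * p = pp x - pp x * (1 - p) by ring.
by rewrite h1 subr0.
Qed.

Lemma comp_dich z : 0 <=: z -> z * p = z ->
  z = 0 \/ (forall f, is_lub (Wc z p) f -> f = p).
Proof.
move=> hz hzp.
have [f hf] := comp_ex hz atom_idem.
have [fi fp f0 fle] := comp_props hz atom_idem hf.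
case: (atom_min fi fp) => hf0.
  left; have h : mt z p = 0.
    apply: lle_anti; last by apply: mt_ge0 => //; exact: atom_ge0.
    rewrite -hf0; case: hf => hf1 _; apply: hf1; exists 1%N; by rewrite mulr1n.
  by rewrite -hzp; apply: disj_mul0 => //; exact: atom_ge0.
by right => f' hf'; rewrite (lub_uniq hf' hf).
Qed.

Lemma tot c r : sc r p <=: c * p \/ c * p <=: sc r p.
Proof.
set x := c * p - sc r p.
have hx : x * p = x.
  by rewrite /x (sc_1mul r p) mulrBl -!mulrA atom_idem.
have hz := fix_p hx.
have hy : np x * p = np x by apply: fix_p; rewrite mulNr hx.
have hxz : x = pp x - np x := ppE x.
case: (comp_dich (pp_ge0 x) hz) => [z0|Hz].
  right; apply: lle_fromsub; apply: lle_eqr (np_ge0 x) _.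
  have h : x = - np x by rewrite {1}hxz z0 sub0r.
  by rewrite -[np x]opprK -h /x; ring.
case: (comp_dich (np_ge0 x) hy) => [y0|Hy].
  left; apply: lle_fromsub; rewrite -/x hxz y0 subr0; exact: pp_ge0.
exfalso; apply: atom_nz.
have [fz hfz] := comp_ex (pp_ge0 x) atom_idem.
have [fy hfy] := comp_ex (np_ge0 x) atom_idem.
have ez := Hz _ hfz; have ey := Hy _ hfy.
have hfy0 : 0 <=: fy by case: (comp_props (np_ge0 x) atom_idem hfy).
have key : mt fz fy <=: 0.
  case: (distr fy hfz) => _; apply => w [w1 [n ->] ->].
  rewrite mtC; case: (distr (mt (pp x *+ n) p) hfy) => _; apply => w' [w2 [m ->] ->].
  apply: lle_trans (mt_mono2 (mt_l _ _) (mt_l _ _)) _.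
  rewrite (@disj_muln2 (np x) (pp x));
    [exact: lle_refl|exact: np_ge0|exact: pp_ge0|by rewrite mtC mt_pp_np].
apply: lle_anti; last exact: atom_ge0.
by rewrite -{1}(mt_id p) -{1}ez -ey.
Qed.

Lemma lle_sub0 a b : a - b <=: 0 -> a <=: b.
Proof. by move=> h; have := lle_addr b h; rewrite subrK add0r. Qed.

Lemma sc_le_inv r s : sc r p <=: sc s p -> r <= s.
Proof.
move=> h; rewrite leNgt; apply/negP => hlt.
have h1 : sc (r - s) p <=: 0.
  by rewrite scBl; apply: lle_subl; rewrite add0r.
have hi : 0 <= (r - s)^-1 by rewrite invr_ge0 subr_ge0 ltW.
have := lle_sc hi h1; rewrite scr0 sc_sc mulVf; last by rewrite subr_eq0 gt_eqF.
rewrite sc1 => h2; apply: atom_nz; exact: lle_anti h2 atom_ge0.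
Qed.

Lemma sc_inj r s : sc r p = sc s p -> r = s.
Proof.
move=> h; apply/eqP; rewrite eq_le; apply/andP; split; apply: sc_le_inv; rewrite h;
  exact: lle_refl.
Qed.

Lemma atom_val c : exists l, c * p = sc l p.
Proof.
pose E := fun r => sc r p <=: c * p.
have [n hn] := bnd c.
have hcp : c * p <=: sc n%:R p.
  by have := lle_mull atom_ge0 hn; rewrite mulr_natl sc_nat.
have hb : Raxioms.bound E.
  exists n%:R => r hr; apply/RleP; apply: sc_le_inv; exact: lle_trans hr hcp.
have [n' hn'] := bnd_below c.
have hne : exists r, E r.
  exists (- n'%:R); rewrite /E scNl sc_nat.
  by have := lle_mull atom_ge0 hn'; rewrite mulNr mulr_natl.
have [l [hl1 hl2]] := Raxioms.completeness E hb hne.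
exists l; apply: lle_anti.
  apply: lle_sub0; apply: (arch_sc atom_ge0) => eps heps.
  case: (tot c (l + eps)) => h.
    by have := hl1 _ h; move/RleP => h'; exfalso; lra.
  apply: lle_subl; apply: lle_trans h _; rewrite scDl addrC; exact: lle_refl.
apply: lle_sub0; apply: (arch_sc atom_ge0) => eps heps.
have [r [hr1 hr2]] : exists r, E r /\ l - eps < r.
  apply: NNPP => hne'.
  have : Rdefinitions.Rle l (l - eps).
    apply: hl2 => r hr; apply/RleP; rewrite leNgt; apply/negP => hlt.
    by apply: hne'; exists r.
  by move/RleP => h'; exfalso; lra.
apply: lle_subl; apply: lle_eq (_ : sc l p = sc eps p + sc (l - eps) p) _.
  by rewrite -scDl; congr (sc _ p); ring.
apply: lle_addl; exact: lle_trans (lle_sc_r (ltW hr2) atom_ge0) hr1.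
Qed.

Definition chi c := myeps (fun l => c * p = sc l p).
Lemma chiP c : c * p = sc (chi c) p.
Proof. exact: (myeps_spec (atom_val c)). Qed.
Lemma chi_uniq c l : c * p = sc l p -> chi c = l.
Proof. by move=> h; apply: sc_inj; rewrite -chiP. Qed.
Lemma chiD a b : chi (a + b) = chi a + chi b.
Proof. by apply: chi_uniq; rewrite mulrDl !chiP scDl. Qed.
Lemma chiM a b : chi (a * b) = chi a * chi b.
Proof. by apply: chi_uniq; rewrite -mulrA chiP -scMr chiP sc_sc mulrC. Qed.
Lemma chi1 : chi 1 = 1.
Proof. by apply: chi_uniq; rewrite mul1r sc1. Qed.
Lemma chi_sc r a : chi (sc r a) = r * chi a.
Proof. by apply: chi_uniq; rewrite -scMl chiP sc_sc. Qed.
Lemma chiN a : chi (- a) = - chi a.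
Proof. by apply: chi_uniq; rewrite mulNr chiP scNl. Qed.
Lemma chiB a b : chi (a - b) = chi a - chi b.
Proof. by rewrite chiD chiN. Qed.
Lemma chi0 : chi 0 = 0.
Proof. by apply: chi_uniq; rewrite mul0r sc0r. Qed.
Lemma chi_nat n : chi (1 *+ n) = n%:R.
Proof. by apply: chi_uniq; rewrite mulr_natl sc_nat. Qed.
Lemma chi_le a b : a <=: b -> chi a <= chi b.
Proof. by move=> h; apply: sc_le_inv; rewrite -!chiP; apply: lle_mull => //; exact: atom_ge0. Qed.
Lemma chi_self : chi p = 1.
Proof. by apply: chi_uniq; rewrite atom_idem sc1. Qed.
Lemma chi_other q : Id_atom q -> q <> p -> chi q = 0.
Proof. by move=> hq hqp; apply: chi_uniq; rewrite atom_dist // ?sc0r //; apply: nesym. Qed.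
End Atom.

Lemma pos_of_chi c : (forall p, Id_atom p -> 0 <= chi p c) -> 0 <=: c.
Proof.
move=> H.
case: (classic (np c = 0)) => [h0|hne].
  rewrite (ppE c) h0 subr0; exact: pp_ge0.
exfalso; set y := np c.
have hy : 0 <=: y := np_ge0 c.
have h1 : idem (1 : B) by rewrite /idem mulr1.
have [f hf] := comp_ex hy h1.
have [fi f1 f0 fle] := comp_props hy h1 hf.
have fnz : f <> 0.
  move=> ef; apply: hne; rewrite -/y.
  have h : mt y 1 = 0.
    apply: lle_anti; last by apply: mt_ge0 => //; exact: le01.
    rewrite -ef; case: hf => hf1 _; apply: hf1; exists 1%N; by rewrite mulr1n.
  by rewrite -(mulr1 y); apply: disj_mul0 => //; exact: le01.
have [q [hq hqf]] := Hat fi fnz.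
have hq0 := atom_ge0 hq.
have hqy : 0 < chi q y.
  rewrite lt_def; apply/andP; split; last by rewrite -(chi0 hq); apply: chi_le.
  apply/eqP => hqy0.
  have e1 : y * q = 0 by rewrite (chiP hq) hqy0 sc0r.
  have d1 : mt y q = 0 by apply: mul0_disj.
  have d2 : mt f q <=: 0.
    case: (distr q hf) => _; apply => w [x [n ->] ->].
    apply: lle_trans (mt_mono q (mt_l _ _)) _.
    rewrite mtC (disj_muln n hq0 hy); [exact: lle_refl|by rewrite mtC].
  have qf : q <=: f.
    apply: lle_fromsub; rewrite -{1}hqf.
    have -> : f - q * f = (1 - q) * f by ring.
    apply: lle_mul0 f0; apply: idem_ge0; apply: idem_compl; exact: atom_idem hq.
  apply: (atom_nz hq); apply: lle_anti hq0.
  apply: lle_trans (mt_max (lle_refl q) qf) _; rewrite mtC; exact: d2.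
have e2 : chi q (pp c) * chi q y = 0.
  rewrite -chiM // (disj_mul0 (pp_ge0 c) (np_ge0 c) (mt_pp_np c)); exact: chi0.
have hpc : chi q (pp c) = 0.
  by move/eqP: e2; rewrite mulf_eq0 => /orP [/eqP //|/eqP h]; move: hqy; rewrite h ltxx.
have := H q hq; rewrite (ppE c) chiB // hpc sub0r oppr_ge0 => h.
by move: hqy; rewrite ltNge h.
Qed.

Lemma chi_le_inv c d : (forall p, Id_atom p -> chi p c <= chi p d) -> c <=: d.
Proof.
move=> H; apply: lle_fromsub; apply: pos_of_chi => p hp.
by rewrite chiB // subr_ge0; apply: H.
Qed.

Lemma chi_ext c d : (forall p, Id_atom p -> chi p c = chi p d) -> c = d.
Proof.
move=> H; apply: lle_anti; apply: chi_le_inv => p hp; rewrite H //; exact: lexx.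
Qed.

Definition rub (P : R -> Prop) (v : R) := forall r, P r -> r <= v.
Definition rlb (P : R -> Prop) (v : R) := forall r, P r -> v <= r.
Definition rlubp (P : R -> Prop) (v : R) := rub P v /\ (forall u : R, rub P u -> v <= u).
Definition rglbp (P : R -> Prop) (v : R) := rlb P v /\ (forall u : R, rlb P u -> u <= v).
Definition chiset p (X : B -> Prop) := fun r => exists2 x, X x & r = chi p x.

Lemma lub_chi (X : B -> Prop) w p : Id_atom p -> is_lub X w -> rlubp (chiset p X) (chi p w).
Proof.
move=> hp [hw1 hw2]; split.
  by move=> r [x hx ->]; apply: chi_le => //; exact: hw1.
move=> u hu; rewrite leNgt; apply/negP => hlt.
set w' := w - sc (chi p w - u) p.
have : w <=: w'.
  apply: hw2 => x hx; apply: chi_le_inv => q hq.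
  rewrite /w' chiB // chi_sc //.
  case: (eqVneq q p) => [->|hqp].
    rewrite chi_self // mulr1 (_ : chi p w - (chi p w - u) = u); last by ring.
    by apply: hu; exists x.
  rewrite (chi_other hq hp) ?mulr0 ?subr0; last by apply/eqP; rewrite eq_sym.
  by apply: chi_le => //; exact: hw1.
move/lle_tosub; rewrite /w' (_ : w - sc (chi p w - u) p - w = - sc (chi p w - u) p); last by ring.
move/lle_opp; rewrite opprK oppr0 -(sc0r p) => /(sc_le_inv hp).
by rewrite subr_le0 leNgt hlt.
Qed.

Lemma glb_chi (X : B -> Prop) w p : Id_atom p -> is_glb X w -> rglbp (chiset p X) (chi p w).
Proof.
move=> hp [hw1 hw2]; split.
  by move=> r [x hx ->]; apply: chi_le => //; exact: hw1.
move=> u hu; rewrite leNgt; apply/negP => hlt.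
set w' := w + sc (u - chi p w) p.
have : w' <=: w.
  apply: hw2 => x hx; apply: chi_le_inv => q hq.
  rewrite /w' chiD // chi_sc //.
  case: (eqVneq q p) => [->|hqp].
    rewrite chi_self // mulr1 (_ : chi p w + (u - chi p w) = u); last by ring.
    by apply: hu; exists x.
  rewrite (chi_other hq hp) ?mulr0 ?addr0; last by apply/eqP; rewrite eq_sym.
  by apply: chi_le => //; exact: hw1.
move/lle_tosub; rewrite /w' (_ : w - (w + sc (u - chi p w) p) = - sc (u - chi p w) p); last by ring.
move/lle_opp; rewrite opprK oppr0 -(sc0r p) => /(sc_le_inv hp).
by rewrite subr_le0 leNgt hlt.
Qed.

Lemma chi_lub (X : B -> Prop) w :
  (forall p, Id_atom p -> rlubp (chiset p X) (chi p w)) -> is_lub X w.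
Proof.
move=> H; split.
  move=> x hx; apply: chi_le_inv => p hp; case: (H p hp) => h _; apply: h; by exists x.
move=> u hu; apply: chi_le_inv => p hp; case: (H p hp) => _; apply.
by move=> r [x hx ->]; apply: chi_le => //; exact: hu.
Qed.

Lemma chi_glb (X : B -> Prop) w :
  (forall p, Id_atom p -> rglbp (chiset p X) (chi p w)) -> is_glb X w.
Proof.
move=> H; split.
  move=> x hx; apply: chi_le_inv => p hp; case: (H p hp) => h _; apply: h; by exists x.
move=> u hu; apply: chi_le_inv => p hp; case: (H p hp) => _; apply.
by move=> r [x hx ->]; apply: chi_le => //; exact: hu.
Qed.

Lemma chi_surj (f : B -> R) (M : R) : 0 <= M ->
  (forall p, Id_atom p -> f p <= M /\ - M <= f p) ->
  exists c, forall p, Id_atom p -> chi p c = f p.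
Proof.
move=> hM Hf.
destruct (classic (exists p : B, Id_atom p)) as [[p0 hp0]|hno]; last first.
  by exists 0 => p hp; exfalso; apply: hno; exists p.
pose X := fun u => exists2 p, Id_atom p & u = sc (f p) p - sc M (1 - p).
have hval q p : Id_atom q -> Id_atom p ->
    chi q (sc (f p) p - sc M (1 - p)) = if q == p then f p else - M.
  move=> hq hp; rewrite chiB // !chi_sc // chiB // chi1 //.
  case: eqP => [->|hqp]; first by rewrite chi_self // subrr mulr0 subr0 mulr1.
  by rewrite (chi_other hq hp) ?mulr0 ?subr0 ?mulr1 ?sub0r //; apply/eqP; rewrite eq_sym; apply/eqP.
have [c hc] : exists c, is_lub X c.
  apply: lub_ex_set; first by exists (sc (f p0) p0 - sc M (1 - p0)), p0.
  exists (sc M 1) => u [p hp ->]; apply: chi_le_inv => q hq.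
  rewrite hval // chi_sc // chi1 // mulr1; case: eqP => _; first by case: (Hf p hp).
  by rewrite -subr_ge0 opprK; rewrite (_ : M + M = M *+ 2) ?mulrn_wge0 //; ring.
exists c => q hq; have [h1 h2] := lub_chi hq hc.
apply/eqP; rewrite eq_le; apply/andP; split; last first.
  by apply: h1; exists (sc (f q) q - sc M (1 - q)); [exists q|rewrite hval // eqxx].
apply: h2 => r [u [p hp ->] ->]; rewrite hval //; case: eqP => [->//|_].
by case: (Hf q hq).
Qed.
End LG.

Local Notation "a <=: b" := (le a b) (at level 70, no associativity).

Section Mor.
Variables (X Y : lalg) (HX : lalg_axioms X) (HY : lalg_axioms Y) (f : X -> Y).
Hypothesis hf : bal_mor f.
Lemma morD a b : f (a + b) = f a + f b. Proof. by case: hf. Qed.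
Lemma morM a b : f (a * b) = f a * f b. Proof. by case: hf => _ []. Qed.
Lemma mor1 : f 1 = 1. Proof. by case: hf => _ [] _ []. Qed.
Lemma morsc r a : f (sc r a) = sc r (f a). Proof. by case: hf => _ [] _ [] _ []. Qed.
Lemma morlub a b s : is_lub (pair_set a b) s -> is_lub (pair_set (f a) (f b)) (f s).
Proof. by case: hf => _ [_ [_ [_ [h _]]]]; apply: h. Qed.
Lemma morglb a b m : is_glb (pair_set a b) m -> is_glb (pair_set (f a) (f b)) (f m).
Proof. by case: hf => _ [_ [_ [_ [_ h]]]]; apply: h. Qed.
Lemma mor0 : f 0 = 0. Proof. by apply: (@addrI _ (f 0)); rewrite -morD !addr0. Qed.
Lemma morN a : f (- a) = - f a.
Proof. by apply: (@addrI _ (f a)); rewrite -morD !subrr mor0. Qed.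
Lemma mor_jn a b : f (jn HX a b) = jn HY (f a) (f b).
Proof. apply: jnE; apply: morlub; exact: jnP. Qed.
Lemma mor_mt a b : f (mt HX a b) = mt HY (f a) (f b).
Proof. apply: mtE; apply: morglb; exact: mtP. Qed.
Lemma mor_le a b : a <=: b -> f a <=: f b.
Proof. move=> h; rewrite -(jn_ge HX h) mor_jn; exact: jn_l. Qed.
Lemma mor_refl a b : f a <=: f b -> a <=: b.
Abort.
End Mor.

Definition charf (X : lalg) (HX : lalg_axioms X) (xi : X -> R) :=
  (forall a b, xi (a + b) = xi a + xi b) /\ xi 1 = 1 /\
      (forall r a, xi (sc r a) = r * xi a) /\
      (forall a b, xi (jn HX a b) = Num.max (xi a) (xi b)) /\
      (forall a b, xi (mt HX a b) = Num.min (xi a) (xi b)) /\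
      (forall a b, a <=: b -> xi a <= xi b).

Lemma char_comp (X Y : lalg) (HX : lalg_axioms X) (HY : lalg_axioms Y) (f : X -> Y) xi :
  bal_mor f -> charf HY xi -> charf HX (fun a => xi (f a)).
Proof.
move=> hf [h1 [h2 [h3 [h4 [h5 h6]]]]]; split; [|split; [|split; [|split; [|split]]]].
- by move=> a b; rewrite (morD hf) h1.
- by rewrite (mor1 hf) h2.
- by move=> r a; rewrite (morsc hf) h3.
- by move=> a b; rewrite (mor_jn HX HY hf) h4.
- by move=> a b; rewrite (mor_mt HX HY hf) h5.
by move=> a b hab; apply: h6; apply: (mor_le HX HY hf).
Qed.

Section Bas.
Variable X : lalg.
Hypotheses (HX : lalg_axioms X) (Hb : bounded X) (Ha : archimedean X)
  (Hd : dedekind_complete X) (Hi : Id_atomic X).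

Lemma basic_char (p : X) : Id_atom p -> charf HX (chi p).
Proof.
move=> hp; split; [|split; [|split; [|split; [|split]]]].
- exact: chiD.
- exact: chi1.
- exact: chi_sc.
- move=> a b; have [h1 h2] := lub_chi HX Hb Ha Hd Hi hp (jnP HX a b).
  apply/eqP; rewrite eq_le; apply/andP; split.
    apply: h2 => r [x [->|->] ->]; rewrite le_max lexx ?orbT //.
  rewrite ge_max; apply/andP; split; apply: h1.
    by exists a; [left|].
  by exists b; [right|].
- move=> a b; have [h1 h2] := glb_chi HX Hb Ha Hd Hi hp (mtP HX a b).
  apply/eqP; rewrite eq_le; apply/andP; split; last first.
    apply: h2 => r [x [->|->] ->]; rewrite ge_min lexx ?orbT //.
  rewrite le_min; apply/andP; split; apply: h1.
    by exists a; [left|].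
  by exists b; [right|].
by move=> a b; apply: chi_le.
Qed.
End Bas.

Section CharF.
Variables (X : lalg) (HX : lalg_axioms X) (xi : X -> R).
Hypothesis hxi : charf HX xi.
Lemma ch0 : xi 0 = 0.
Proof. case: hxi => h _; by apply: (@addrI _ (xi 0)); rewrite -h !addr0. Qed.
Lemma chN a : xi (- a) = - xi a.
Proof. case: hxi => h _; by apply: (@addrI _ (xi a)); rewrite -h !subrr ch0. Qed.
Lemma chB a b : xi (a - b) = xi a - xi b.
Proof. by case: hxi => h _; rewrite h chN. Qed.
Lemma chn a n : xi (a *+ n) = xi a *+ n.
Proof.
case: hxi => h _; elim: n => [|n IH]; first by rewrite !mulr0n ch0.
by rewrite !mulrS h IH.
Qed.
Lemma ch_w d n : xi (jn HX (1 - (jn HX d (- d)) *+ n) 0) =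
   Num.max (1 - (Num.max (xi d) (- xi d)) *+ n) 0.
Proof.
case: hxi => _ [h1 [_ [hj _]]].
by rewrite hj chB h1 chn hj chN ch0.
Qed.
End CharF.

Lemma absmax (t : R) : t != 0 -> 0 < Num.max t (- t).
Proof.
move=> ht; rewrite lt_max; have [h|h] := ltP 0 t => //=.
by rewrite oppr_gt0 lt_neqAle ht h.
Qed.

Section Ext.
Variables (A S : lalg) (e : A -> S).
Hypotheses (HA : lalg_axioms A) (HbA : bounded A) (HaA : archimedean A).
Hypotheses (HS : lalg_axioms S) (HbS : bounded S) (HaS : archimedean S)
  (HdS : dedekind_complete S) (HiS : Id_atomic S).
Hypotheses (be : bal_mor e) (einj : injective e) (hcomp : compactness e).
Hypothesis Snt : ~ ((1 : S) <=: 0).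

Lemma e_refl a b : e a <=: e b -> a <=: b.
Proof.
move=> h; have h1 : e (mt HA a b) = e a by rewrite (mor_mt HA HS be) (mt_le HS h).
rewrite -(einj h1); exact: mt_r.
Qed.

Lemma one_le0 (x : S) : x <=: x - 1 -> False.
Proof.
move=> h; apply: Snt; have := lle_tosub HS h.
rewrite (_ : x - 1 - x = - 1); last by ring.
by move/(lle_opp HS); rewrite opprK oppr0.
Qed.

Lemma find_atom (phi : A -> R) : charf HA phi ->
  exists q, Id_atom q /\ forall a, chi q (e a) = phi a.
Proof.
move=> hphi; have [pD [p1 [psc [pjn [pmt ple]]]]] := hphi.
pose U := fun a => phi a = 1 /\ 0 <=: a.
have hU1 : U 1 := conj p1 (le01 HA HbA).
have list_min : forall (l : seq A) x0, (forall x, x \in x0 :: l -> U x) ->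
    exists a, phi a = 1 /\ forall x, x \in x0 :: l -> a <=: x.
  elim=> [|x1 l IH] x0 hl.
    exists x0; split; first by case: (hl x0); rewrite ?inE ?eqxx.
    by move=> x; rewrite inE => /eqP ->; exact: lle_refl.
  have [a' [pa' ha']] : exists a, phi a = 1 /\ forall x, x \in x1 :: l -> a <=: x.
    by apply: IH => x hx; apply: hl; rewrite inE hx orbT.
  exists (mt HA x0 a'); split.
    by rewrite pmt pa'; case: (hl x0); rewrite ?inE ?eqxx // => ->; rewrite minxx.
  move=> x; rewrite inE => /orP [/eqP ->|hx]; first exact: mt_l.
  apply: (lle_trans HA) (ha' x hx); exact: mt_r.
have [k [hk1 hk2]] : exists k, is_glb (Defs.image e U) k.
  apply: (glb_ex_set HS HdS); first by exists (e 1), 1.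
  exists 0 => y [x [_ hx] ->]; rewrite -(mor0 be); exact: (mor_le HA HS be hx).
have knot : ~ (k <=: 0).
  move=> hk.
  pose h := sc (2^-1) (1 : A).
  have heps : Rdefinitions.Rlt 0 (2^-1) by apply/RltP; rewrite invr_gt0 ltr0n.
  have hj : is_lub (Defs.image e (fun y => y = h)) (e h).
    split; first by move=> y [x -> ->]; exact: lle_refl.
    by move=> u hu; apply: hu; exists h.
  have hle : k + sc (2^-1) 1 <=: e h.
    rewrite /h (morsc be) (mor1 be).
    by apply: lle_eqr (lle_addr HS _ hk) _; rewrite add0r.
  have [X' [Y' [m' [j' [hX [hY [hm [hj' hmj]]]]]]]] :=
    hcomp heps (conj hk1 hk2) hj hle.
  case: Y' hY hj' hmj => [|y0 Y''] hY hj' hmj.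
    apply: (@one_le0 j'); case: hj' => _; apply => y [x]; by rewrite in_nil.
  have hj'h : j' <=: e h.
    case: hj' => _; apply => y [x hx ->]; rewrite (hY x hx); exact: lle_refl.
  case: X' hX hm => [|x0 X''] hX hm.
    apply: (@one_le0 (e h + 1)); rewrite addrK.
    apply: (lle_trans HS (b := m')); last first.
      by have := lle_trans HS hmj hj'h.
    case: hm => _; apply => y [x]; by rewrite in_nil.
  have [a [pa ha]] := list_min X'' x0 hX.
  have hea : e a <=: m'.
    case: hm => _; apply => y [x hx ->]; exact: (mor_le HA HS be (ha x hx)).
  have hah : a <=: h by apply: e_refl; by have := lle_trans HS hea (lle_trans HS hmj hj'h).
  have := ple _ _ hah; rewrite pa /h psc p1 mulr1 => h2.
  lra.
have [q [hq hqk]] : exists q, Id_atom q /\ 0 < chi q k.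
  apply: NNPP => hne; apply: knot; apply: (chi_le_inv HS HbS HaS HdS HiS) => q hq.
  rewrite (chi0 HS HbS HaS HdS hq) leNgt; apply/negP => hlt; apply: hne; by exists q.
have hpsi := char_comp HA be (basic_char HS HbS HaS HdS HiS hq).
have [sD [s1 [ssc [sjn [smt sle]]]]] := hpsi.
have kU a : U a -> chi q k <= chi q (e a).
  move=> ha; apply: (chi_le HS HbS HaS HdS hq); apply: hk1; by exists a.
move=> {hk1 hk2 knot}.
exists q; split => // a.
set d := a - sc (phi a) 1.
have pd : phi d = 0 by rewrite /d (chB hphi) psc p1 mulr1 subrr.
have sd : chi q (e d) = 0.
  apply/eqP; apply: contraT => ht.
  have hT := absmax ht.
  set T := Num.max _ _ in hT.
  pose n := Num.Def.archi_bound (T^-1).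
  have hn : T^-1 < n%:R by apply: archi_boundP; rewrite invr_ge0 ltW.
  have hnT : 1 < T *+ n.
    have hTT : T * T^-1 = 1 by rewrite mulfV // gt_eqF.
    rewrite -mulr_natr; nra.
  set w := jn HA (1 - (jn HA d (- d)) *+ n) 0.
  have Uw : U w.
    split; last exact: jn_r.
    by rewrite /w (ch_w hphi) pd oppr0 maxxx mul0rn subr0 max_l ?ler01.
  have := kU w Uw; rewrite /w (ch_w hpsi) -/T max_r; last by rewrite subr_le0 ltW.
  by rewrite leNgt hqk.
have -> : a = d + sc (phi a) 1 by rewrite /d subrK.
by rewrite sD ssc s1 mulr1 sd add0r pD psc p1 mulr1 pd add0r.
Qed.
End Ext.

Lemma is_lub_ext (X : lalg) (P Q : X -> Prop) s :
  (forall x, P x <-> Q x) -> is_lub P s -> is_lub Q s.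
Proof.
move=> H [h1 h2]; split; first by move=> x /H; apply: h1.
by move=> u hu; apply: h2 => x /H; apply: hu.
Qed.
Lemma is_glb_ext (X : lalg) (P Q : X -> Prop) s :
  (forall x, P x <-> Q x) -> is_glb P s -> is_glb Q s.
Proof.
move=> H [h1 h2]; split; first by move=> x /H; apply: h1.
by move=> u hu; apply: h2 => x /H; apply: hu.
Qed.
Lemma rlubp_ext (P Q : R -> Prop) v : (forall x, P x <-> Q x) -> rlubp P v -> rlubp Q v.
Proof.
move=> H [h1 h2]; split; first by move=> x /H; apply: h1.
by move=> u hu; apply: h2 => x /H; apply: hu.
Qed.
Lemma rglbp_ext (P Q : R -> Prop) v : (forall x, P x <-> Q x) -> rglbp P v -> rglbp Q v.
Proof.
move=> H [h1 h2]; split; first by move=> x /H; apply: h1.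
by move=> u hu; apply: h2 => x /H; apply: hu.
Qed.

Section Final.
Variables (A S : lalg) (e : A -> S) (C : lalg) (alpha : A -> C).
Hypotheses (HA : lalg_axioms A) (HbA : bounded A) (HaA : archimedean A).
Hypotheses (HS : lalg_axioms S) (HbS : bounded S) (HaS : archimedean S)
  (HdS : dedekind_complete S) (HiS : Id_atomic S).
Hypotheses (HC : lalg_axioms C) (HbC : bounded C) (HaC : archimedean C)
  (HdC : dedekind_complete C) (HiC : Id_atomic C).
Hypotheses (be : bal_mor e) (einj : injective e) (hdens : density e)
  (hcomp : compactness e) (balpha : bal_mor alpha).

Lemma uniq_part (g1 g2 : S -> C) : normal_hom g1 -> normal_hom g2 ->
  (forall a, g1 (e a) = alpha a) -> (forall a, g2 (e a) = alpha a) -> g1 = g2.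
Proof.
move=> [_ [l1 m1]] [_ [l2 m2]] h1 h2; apply: functional_extensionality => x.
have [K [hK hKl]] := hdens x.
have hk k : K k -> g1 k = g2 k.
  move=> kK; have [U hU] := hK k kK.
  have eq g : (forall a, g (e a) = alpha a) ->
      forall y, Defs.image g (Defs.image e U) y <-> Defs.image alpha U y.
    move=> hg y; split.
      by move=> [z [a ha ->] ->]; exists a; rewrite ?hg.
    by move=> [a ha ->]; exists (e a); [exists a|rewrite hg].
  apply: (glb_uniq HC (is_glb_ext (eq _ h1) (m1 _ _ hU))).
  exact: (is_glb_ext (eq _ h2) (m2 _ _ hU)).
apply: (lub_uniq HC (l1 _ _ hKl)); apply: is_lub_ext (l2 _ _ hKl) => y; split.
  by move=> [k kK ->]; exists k; rewrite ?hk.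
by move=> [k kK ->]; exists k; rewrite ?hk.
Qed.

Lemma exist_part : exists gamma : S -> C,
  normal_hom gamma /\ (forall a, gamma (e a) = alpha a).
Proof.
have hq : forall p : C, exists q : S, Id_atom p ->
    Id_atom q /\ forall a, chi q (e a) = chi p (alpha a).
  move=> p; case: (classic (Id_atom p)) => hp; last by exists 0.
  have Snt : ~ ((1 : S) <=: 0).
    move=> h10; apply: (atom_nz hp).
    have e10 : (1 : S) = 0 := lle_anti HS h10 (le01 HS HbS).
    have a10 : (1 : A) = 0 by apply: einj; rewrite (mor1 be) (mor0 be).
    have c10 : (1 : C) = 0 by rewrite -(mor1 balpha) a10 (mor0 balpha).
    by rewrite -(mulr1 p) c10 mulr0.
  have [q [hq1 hq2]] := find_atom HbA HS HbS HaS HdS HiS be einj hcomp Snt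
    (char_comp HA balpha (basic_char HC HbC HaC HdC HiC hp)).
  by exists q.
pose qof p := proj1_sig (constructive_indefinite_description _ (hq p)).
have qofP p : Id_atom p -> Id_atom (qof p) /\ forall a, chi (qof p) (e a) = chi p (alpha a).
  exact: (proj2_sig (constructive_indefinite_description _ (hq p))).
have hg : forall x : S, exists c : C, forall p, Id_atom p -> chi p c = chi (qof p) x.
  move=> x; have [n1 h1] := bnd HbS x; have [n2 h2] := bnd_below HS HbS x.
  apply: (chi_surj HC HbC HaC HdC HiC (M := (n1 + n2)%:R)); first exact: ler0n.
  move=> p hp; have [hq1 _] := qofP p hp.
  have u1 := chi_le HS HbS HaS HdS hq1 h1.
  have u2 := chi_le HS HbS HaS HdS hq1 h2.
  rewrite chi_nat // in u1; rewrite chiN // chi_nat // in u2.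
  rewrite natrD; split; first by apply: le_trans u1 _; rewrite lerDl ler0n.
  by apply: le_trans u2; rewrite lerN2 lerDr ler0n.
pose gam x := proj1_sig (constructive_indefinite_description _ (hg x)).
have gamP x p : Id_atom p -> chi p (gam x) = chi (qof p) x.
  exact: (proj2_sig (constructive_indefinite_description _ (hg x))).
have qa p hp := proj1 (qofP p hp).
have glub (X : S -> Prop) s : is_lub X s -> is_lub (Defs.image gam X) (gam s).
  move=> hs; apply: (chi_lub HC HbC HaC HdC HiC) => p hp; rewrite gamP //.
  apply: rlubp_ext (lub_chi HS HbS HaS HdS HiS (qa p hp) hs) => r; split.
    by move=> [x hx ->]; exists (gam x); [exists x|rewrite gamP].
  by move=> [y [x hx ->] ->]; exists x; rewrite ?gamP.
have gglb (X : S -> Prop) s : is_glb X s -> is_glb (Defs.image gam X) (gam s).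
  move=> hs; apply: (chi_glb HC HbC HaC HdC HiC) => p hp; rewrite gamP //.
  apply: rglbp_ext (glb_chi HS HbS HaS HdS HiS (qa p hp) hs) => r; split.
    by move=> [x hx ->]; exists (gam x); [exists x|rewrite gamP].
  by move=> [y [x hx ->] ->]; exists x; rewrite ?gamP.
have pairE a b y : Defs.image gam (pair_set a b) y <-> pair_set (gam a) (gam b) y.
  split; first by move=> [x [->|->] ->]; [left|right].
  by move=> [->|->]; [exists a; [left|]|exists b; [right|]].
have ext := chi_ext HC HbC HaC HdC HiC.
exists gam; split; last first.
  move=> a; apply: ext => p hp; rewrite gamP //; by case: (qofP p hp).
split; last by split; [exact: glub|exact: gglb].
split.
  move=> a b; apply: ext => p hp.
  by rewrite (chiD HC HbC HaC HdC hp) !gamP // (chiD HS HbS HaS HdS (qa p hp)).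
split.
  move=> a b; apply: ext => p hp.
  by rewrite (chiM HC HbC HaC HdC hp) !gamP // (chiM HS HbS HaS HdS (qa p hp)).
split.
  apply: ext => p hp.
  by rewrite (chi1 HC HbC HaC HdC hp) !gamP // (chi1 HS HbS HaS HdS (qa p hp)).
split.
  move=> r a; apply: ext => p hp.
  by rewrite (chi_sc HC HbC HaC HdC hp) !gamP // (chi_sc HS HbS HaS HdS (qa p hp)).
split.
  by move=> a b s hs; apply: is_lub_ext (glub _ _ hs).
by move=> a b s hs; apply: is_glb_ext (gglb _ _ hs).
Qed.
End Final.

Theorem theorem4p3 (A S : lalg) (e : A -> S) :
  bal A -> canonical_extension e ->
  forall (C : lalg) (alpha : A -> C), basic C -> bal_mor alpha ->
  exists! gamma : S -> C, normal_hom gamma /\ (forall a, gamma (e a) = alpha a).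
Proof.
move=> [HA [HbA HaA]] [[[HS [HbS HaS]] [HdS HiS]] [be [einj [hdens hcomp]]]]
  C alpha [[HC [HbC HaC]] [HdC HiC]] balpha.
have [g [hg1 hg2]] := exist_part HA HbA HS HbS HaS HdS HiS HC HbC HaC HdC HiC
  be einj hcomp balpha.
exists g; split => // g' [h1 h2].
exact: (uniq_part HC hdens hg1 h1 hg2 h2).
Qed.
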